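(* Assume $\eta$ is supported on $\{\mathbf{x}\in E:|\mathbf{x}|_\infty\le R\}$ for some $R>0$. Let $\rho$ be a Borel probability measure on $\mathsf{X}$ and let $Y$ be a discrete-time Markov process on $\mathsf{X}$ with transition kernel $\mu$ and $Y_0\sim\rho$. Let $k$ be a nonnegative integer. Then $g(Y_{k+1})\le g(Y_k)+R$ almost surely, and consequently $g(Y_k)\le g(Y_0)+kR$ almost surely.
   Context: Fix $\theta_a,\theta_d>0$, positive integers $n,N$, $E=\mathbb{R}^N$ with the $\infty$-norm $|\cdot|_\infty$, and a Borel probability measure $\eta$ on $E$ with finite mean. $[k]=\{0,\dots,k-1\}$; $|\psi|=\sum_{i\in[n]}\psi(i)$. State space: $\mathsf{X}=\{(\psi,\mathbf{v})\in\{0,1\}^{[n]}\times E^{[n+1]}:\sum_{i\in[n]}\psi(i)(\mathbf{v}(i)-\mathbf{v}(n))=0\}$ (subspace of the product topology, discrete on $\{0,1\}$, Euclidean on $E$). For $i\in[n]$: $r_i(\psi)=\frac{\theta_d\psi(i)+\theta_a(1-\psi(i))}{\theta_d|\psi|+\theta_a(n-|\psi|)}$; $s_i(\psi)$ agrees with $\psi$ except $s_i(\psi)(i)=1-\psi(i)$. For $\mathsf{x}=(\psi,\mathbf{v})\in\mathsf{X}$, $\lambda_i^{\mathsf{x}}$ is the law of $(s_i(\psi),\mathbf{w})$ with $\mathbf{w}(j)=\mathbf{v}(j)$ for $j\in[n]\setminus\{i\}$ and $(\mathbf{w}(i),\mathbf{w}(n))$ equal to $(\mathbf{v}(i),\mathbf{v}(n))$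 if $|\psi|=\psi(i)=1$; $(\mathbf{v}(i),\mathbf{v}(n)-\frac{\mathbf{v}(i)-\mathbf{v}(n)}{|\psi|-1})$ if $|\psi|>\psi(i)=1$; $(\mathbf{x}+\mathbf{v}(n),\frac{\mathbf{x}}{|\psi|+1}+\mathbf{v}(n))$ with $\mathbf{x}\sim\eta$ if $\psi(i)=0$. $\mu(\mathsf{x},B)=\sum_{i\in[n]}r_i(\psi)\lambda_i^{\mathsf{x}}(B)$. $f_i(\psi,\mathbf{v})=\mathbf{v}(i)$ for $i\in[n+1]$, and $g(\mathsf{x})=\max\{|f_i(\mathsf{x})|_\infty:i\in[n+1]\}$. *)

(* Defs.v *)
From HB Require Import structures.
From mathcomp Require Import all_boot all_order all_algebra.
From mathcomp Require Import all_classical all_reals all_analysis.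
Set Implicit Arguments. Unset Strict Implicit. Unset Printing Implicit Defensive.
Import Order.TTheory GRing.Theory Num.Theory.
Local Open Scope classical_set_scope.
Local Open Scope ring_scope.

(* E = R^N, represented as N.-tuple R; its canonical measurable structure is
   the product sigma-algebra of the Borel sets of R, i.e. the Borel sets of R^N. *)
Definition Evec (R : realType) (N : nat) := (N.-tuple R).

(* ambient space {0,1}^[n] x E^[n+1]; psi is an n.-tuple bool,
   v is an (n.+1).-tuple of vectors, v(n) being the last entry. *)
Definition state (R : realType) (n N : nat) :=
  (n.-tuple bool * (n.+1).-tuple (N.-tuple R))%type.

Section defs.
Variables (R : realType) (n N : nat).

Definition vadd (a b : N.-tuple R) : N.-tuple R := [tuple tnth a j + tnth b j | j < N].
Definition vsub (a b : N.-tuple R) : N.-tuple R := [tuple tnth a j - tnth b j | j < N].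
Definition vscale (c : R) (a : N.-tuple R) : N.-tuple R := [tuple c * tnth a j | j < N].

Definition supnorm (a : N.-tuple R) : R := \big[Num.max/0]_(j < N) `|tnth a j|.

Definition lidx (i : 'I_n) : 'I_n.+1 := widen_ord (leqnSn n) i.
Definition last_idx : 'I_n.+1 := ord_max.

Definition card_psi (psi : n.-tuple bool) : nat := \sum_(i < n) (tnth psi i : nat).

Definition Xset : set (state R n N) :=
  [set x | forall j : 'I_N,
     \sum_(i < n) (if tnth x.1 i
                   then tnth (tnth x.2 (lidx i)) j - tnth (tnth x.2 last_idx) j
                   else 0) = 0].

Definition rate (th_a th_d : R) (psi : n.-tuple bool) (i : 'I_n) : R :=
  (if tnth psi i then th_d else th_a) /
  (th_d * (card_psi psi)%:R + th_a * (n - card_psi psi)%:R).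

Definition flip (psi : n.-tuple bool) (i : 'I_n) : n.-tuple bool :=
  [tuple if j == i then ~~ tnth psi j else tnth psi j | j < n].

Definition upd2 (v : (n.+1).-tuple (N.-tuple R)) (i : 'I_n) (a b : N.-tuple R) :
  (n.+1).-tuple (N.-tuple R) :=
  [tuple if j == lidx i then a else if j == last_idx then b else tnth v j | j < n.+1].

(* the new state (s_i(psi), w) when the random vector drawn from eta is e *)
Definition step (x : state R n N) (i : 'I_n) (e : N.-tuple R) : state R n N :=
  let psi := x.1 in let v := x.2 in
  let vi := tnth v (lidx i) in let vn := tnth v last_idx in
  (flip psi i,
   if tnth psi i then
     (if card_psi psi == 1%N then upd2 v i vi vn
      else upd2 v i vi (vsub vn (vscale ((card_psi psi)%:R - 1)^-1 (vsub vi vn))))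
   else upd2 v i (vadd e vn) (vadd (vscale ((card_psi psi)%:R + 1)^-1 e) vn)).

Definition lambda (eta : probability (N.-tuple R) R) (x : state R n N) (i : 'I_n)
  (B : set (state R n N)) : \bar R :=
  eta [set e | B (step x i e)].

Definition mu (th_a th_d : R) (eta : probability (N.-tuple R) R)
  (x : state R n N) (B : set (state R n N)) : \bar R :=
  (\sum_(i < n) (rate th_a th_d x.1 i)%:E * lambda eta x i B)%E.

Definition fcoord (i : 'I_n.+1) (x : state R n N) : N.-tuple R := tnth x.2 i.
Definition gmax (x : state R n N) : R := \big[Num.max/0]_(i < n.+1) supnorm (fcoord i x).

Definition nat_filtration d (Omega : measurableType d) (Y : nat -> Omega -> state R n N)
  (k : nat) : set (set Omega) :=
  <<s \bigcup_(j in [set j : nat | (j <= k)%N]) preimage_set_system setT (Y j) measurable >>.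

Definition markov_process d (Omega : measurableType d) (P : probability Omega R)
  (Y : nat -> Omega -> state R n N)
  (kern : state R n N -> set (state R n N) -> \bar R)
  (rho : probability (state R n N) R) : Prop :=
  [/\ forall k, measurable_fun setT (Y k),
      forall k w, Xset (Y k w),
      forall B, measurable B -> P (Y 0%N @^-1` B) = rho B &
      forall k A B, nat_filtration Y k A -> measurable B ->
        P (A `&` Y k.+1 @^-1` B) = (\int[P]_(w in A) kern (Y k w) B)%E].

End defs.

(* Main.v *)
Require Import Defs.
From HB Require Import structures.
From mathcomp Require Import all_boot all_order all_algebra.
From mathcomp Require Import all_classical all_reals all_analysis.
From mathcomp Require Import ring lra.
From mathcomp Require Import measurable_realfun.
Import Order.TTheory GRing.Theory Num.Theory.
Local Open Scope classical_set_scope.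
Local Open Scope ring_scope.
Set Implicit Arguments.

Section det.
Variables (R : realType) (n N : nat).

Lemma bmax_ub (I : finType) (F : I -> R) j : F j <= \big[Num.max/0]_(i : I) F i.
Proof. by rewrite (bigD1 j) //= le_max lexx. Qed.

Lemma bmax_ge0 (I : finType) (F : I -> R) : 0 <= \big[Num.max/0]_(i : I) F i.
Proof. by elim/big_rec: _ => // i y _ hy; rewrite le_max hy orbT. Qed.

Lemma bmax_le (I : finType) (F : I -> R) c : 0 <= c -> (forall i, F i <= c) ->
  \big[Num.max/0]_(i : I) F i <= c.
Proof. by move=> c0 h; elim/big_ind: _ => // x y hx hy; rewrite ge_max hx hy. Qed.

Lemma coord_le (x : state R n N) m j : `|tnth (tnth x.2 m) j| <= gmax x.
Proof.
rewrite /gmax; apply: le_trans _ (@bmax_ub _ (fun i => supnorm (fcoord i x)) m).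
rewrite /fcoord /supnorm.
exact: (@bmax_ub _ (fun j => `|tnth (tnth x.2 m) j|) j).
Qed.

Lemma gmax_le (x : state R n N) c : 0 <= c ->
  (forall m j, `|tnth (tnth x.2 m) j| <= c) -> gmax x <= c.
Proof.
move=> c0 h; apply: bmax_le => // m; apply: bmax_le => // j; exact: h.
Qed.

Lemma step_bound (x : state R n N) i e Rad : Xset x -> supnorm e <= Rad ->
  gmax (step x i e) <= gmax x + Rad.
Proof.
move=> hX he.
have G0 : 0 <= gmax x by apply: bmax_ge0.
have R0 : 0 <= Rad by apply: le_trans _ he; apply: bmax_ge0.
have eb j : `|tnth e j| <= Rad.
  by apply: le_trans _ he; exact: (@bmax_ub _ (fun j => `|tnth e j|) j).
have cb m j : `|tnth (tnth x.2 m) j| <= gmax x + Rad.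
  by apply: le_trans (coord_le x m j) _; rewrite lerDl.
apply: gmax_le; first exact: addr_ge0.
move=> m j; rewrite /step /=.
case: x hX G0 cb => psi v hX G0 cb /=.
have li : lidx i != last_idx n.
  by rewrite -val_eqE /= neq_ltn ltn_ord.
case hp: (tnth psi i).
- case: ifP => hc.
  + rewrite /upd2 tnth_mktuple; case: ifP => _; first exact: cb.
    by case: ifP => _; exact: cb.
  + rewrite /upd2 tnth_mktuple; case: ifP => _; first exact: cb.
    case: ifP => _; last exact: cb.
    apply: le_trans _ (_ : gmax (psi, v) <= _); last by rewrite lerDl.
    set a := fun i' => tnth (tnth v (lidx i')) j.
    set b := tnth (tnth v (last_idx n)) j.
    set mm := (\sum_(i' < n | i' != i) (tnth psi i' : nat))%N.
    have hcard : card_psi psi = (1 + mm)%N.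
      by rewrite /card_psi (bigD1 i) //= hp.
    have m0 : (0 < mm)%N.
      by move: hc; rewrite hcard; case: (mm).
    have Km : (card_psi psi)%:R - 1 = mm%:R :> R.
      by rewrite hcard natrD; ring.
    have mE : mm%:R = \sum_(i' < n | i' != i) ((tnth psi i' : nat)%:R : R).
      by rewrite /mm natr_sum.
    set S2 := \sum_(i' < n | i' != i) (if tnth psi i' then a i' else 0).
    have eK : \sum_(i' < n | i' != i) (if tnth psi i' then a i' - b else 0)
        = S2 - b * mm%:R.
      rewrite mE mulr_sumr -sumrB; apply: eq_bigr => i' _.
      by case: (tnth psi i') => /=; rewrite ?mulr1 ?mulr0 ?subr0.
    have h0 : a i - b + (S2 - b * mm%:R) = 0.
      by rewrite -eK; move: (hX j); rewrite (bigD1 i) //= hp.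
    have mR0 : (mm%:R : R) != 0 by rewrite pnatr_eq0 -lt0n.
    rewrite /vsub /vscale !tnth_mktuple Km -/b.
    have -> : tnth (tnth v (lidx i)) j - b = - (S2 - b * mm%:R).
      by apply/eqP; rewrite -addr_eq0 h0.
    have -> : b - (mm%:R)^-1 * - (S2 - b * mm%:R) = (mm%:R)^-1 * S2.
      by field.
    rewrite normrM ger0_norm ?invr_ge0 ?ler0n //.
    have hS : `|S2| <= gmax (psi, v) * mm%:R.
      apply: le_trans (ler_norm_sum _ _ _) _.
      rewrite mE mulr_sumr; apply: ler_sum => i' _.
      case: (tnth psi i') => /=; rewrite ?mulr1 ?mulr0 ?normr0 //.
      exact: (coord_le (psi, v)).
    apply: le_trans (ler_wpM2l _ hS) _; first by rewrite invr_ge0 ler0n.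
    by rewrite mulrC mulfK.
- rewrite /upd2 tnth_mktuple; case: ifP => [_|_].
    rewrite /vadd tnth_mktuple; apply: le_trans (ler_normD _ _) _.
    rewrite [X in _ <= X]addrC; apply: lerD; [exact: eb | exact: (coord_le (psi, v))].
  case: ifP => [_|_]; last exact: cb.
  rewrite /vadd /vscale !tnth_mktuple; apply: le_trans (ler_normD _ _) _.
  rewrite [X in _ <= X]addrC; apply: lerD; last exact: (coord_le (psi, v)).
  rewrite normrM; apply: le_trans _ (eb j); apply: ler_piMl => //.
  rewrite ger0_norm ?invr_ge0 // ?addr_ge0 // invf_le1 ?ltr_wpDl //.
  by rewrite lerDr.
Qed.
End det.

Lemma mset d (T : measurableType d) (b : T -> bool) :
  measurable_fun setT b -> measurable [set x | b x].
Proof.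
move=> mb; have := mb measurableT [set true] I.
by rewrite setTI; congr measurable; apply/seteqP; split => x /=.
Qed.

Section meas.
Variables (R : realType).

Lemma mbmax d (T : measurableType d) (I : finType) (F : I -> T -> R) :
  (forall i, measurable_fun setT (F i)) ->
  measurable_fun setT (fun x => \big[Num.max/0]_(i : I) F i x).
Proof.
move=> mF; rewrite unlock /=.
elim: (index_enum I) => [|a s IH] /=; first exact: measurable_cst.
exact: (measurable_maxr (mF a) IH).
Qed.

Lemma msupnorm N : measurable_fun setT (@supnorm R N).
Proof.
rewrite /supnorm; apply: (@mbmax _ _ _ (fun j (e : N.-tuple R) => `|tnth e j|)) => j.
by apply: (@measurableT_comp _ _ _ _ _ _ (@Num.norm R R) _ (fun e : N.-tuple R => tnth e j)); [exact: normr_measurable | exact: measurable_tnth].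
Qed.

Lemma mgmax n N : measurable_fun setT (@gmax R n N).
Proof.
rewrite /gmax; apply: (@mbmax _ _ _ (fun i (x : state R n N) => supnorm (fcoord i x))) => i.
apply: (@measurableT_comp _ _ _ _ _ _ (@supnorm R N) _ (fun x : state R n N => tnth x.2 i)); first exact: msupnorm.
by apply: (@measurableT_comp _ _ _ _ _ _ (fun t => tnth t i) _ snd); [exact: measurable_tnth | exact: measurable_snd].
Qed.

Lemma mupd2 n N (v : (n.+1).-tuple (N.-tuple R)) i
   (A B : N.-tuple R -> N.-tuple R) :
  measurable_fun setT A -> measurable_fun setT B ->
  measurable_fun setT (fun e => upd2 v i (A e) (B e)).
Proof.
move=> mA mB; apply/measurable_fun_tnthP => m.
rewrite /comp /upd2; under eq_fun do rewrite tnth_mktuple.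
case: (m == lidx i); first exact: mA.
case: (m == last_idx n); first exact: mB.
exact: measurable_cst.
Qed.

Lemma mstep n N (x : state R n N) i : measurable_fun setT (step x i).
Proof.
apply: (measurable_fun_pair (f := fun=> flip x.1 i) (g := fun e => (step x i e).2)).
  exact: measurable_cst.
rewrite /step /=; case: (tnth x.1 i).
  by case: ifP => _; exact: measurable_cst.
apply: mupd2.
  apply/measurable_fun_tnthP => j; rewrite /comp /vadd.
  under eq_fun do rewrite tnth_mktuple.
  exact: measurable_funD (measurable_tnth j) (measurable_cst _).
apply/measurable_fun_tnthP => j; rewrite /comp /vadd /vscale.
under eq_fun do rewrite !tnth_mktuple.
apply: measurable_funD (measurable_cst _).
exact: measurable_funM (measurable_cst _) (measurable_tnth j).
Qed.
End meas.

Lemma onestep (R : realType) (n N : nat) (th_a th_d : R)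
  (eta : probability (N.-tuple R) R) (Rad : R)
  (d : measure_display) (Omega : measurableType d) (P : probability Omega R)
  (rho : probability (state R n N) R) (Y : nat -> Omega -> state R n N) (k : nat) :
  eta [set e | supnorm e <= Rad] = 1%E ->
  markov_process P Y (mu th_a th_d eta) rho ->
  {ae P, forall w, gmax (Y k.+1 w) <= gmax (Y k w) + Rad}.
Proof.
move=> hEta [mY XY _ hM].
have mS : measurable [set e : N.-tuple R | supnorm e <= Rad].
  apply: (@mset _ _ (fun e : N.-tuple R => supnorm e <= Rad)).
  exact: (measurable_fun_ler (@msupnorm R N) (measurable_cst Rad)).
have etaC : eta (~` [set e | supnorm e <= Rad]) = 0%E.
  by rewrite probability_setC // hEta subee.
have bad r : P.-negligible (Y k @^-1` [set x | gmax x < r - Rad] `&`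
                            Y k.+1 @^-1` [set x | r < gmax x]).
  have mB : measurable [set x : state R n N | r < gmax x].
    apply: (@mset _ _ (fun x : state R n N => r < gmax x)).
    exact: (measurable_fun_ltr (measurable_cst r) (@mgmax R n N)).
  have mA' : measurable [set x : state R n N | gmax x < r - Rad].
    apply: (@mset _ _ (fun x : state R n N => gmax x < r - Rad)).
    exact: (measurable_fun_ltr (@mgmax R n N) (measurable_cst (r - Rad))).
  have mYA : measurable (Y k @^-1` [set x | gmax x < r - Rad]).
    by have := mY k measurableT _ mA'; rewrite setTI.
  have mYB : measurable (Y k.+1 @^-1` [set x | r < gmax x]).
    by have := mY k.+1 measurableT _ mB; rewrite setTI.
  apply/negligibleP; first exact: measurableI.
  have hF : nat_filtration Y k (Y k @^-1` [set x | gmax x < r - Rad]).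
    rewrite /nat_filtration; apply: sub_sigma_algebra; exists k => //=.
    by exists [set x | gmax x < r - Rad] => //; rewrite setTI.
  apply: eq_trans (hM k _ _ hF mB) _.
  transitivity (\int[P]_(w in Y k @^-1` [set x : state R n N | (gmax x < r - Rad)%R]) (cst 0%E w))%E;
    last exact: integral0.
  apply: eq_integral => w; rewrite inE /= => Aw.
  rewrite /mu big1 // => i _; rewrite /lambda.
  have -> : eta [set e | r < gmax (step (Y k w) i e)] = 0%E.
    apply/eqP; rewrite eq_le measure_ge0 andbT -etaC; apply: le_measure; rewrite ?inE //.
    - by have := (@mstep R n N (Y k w) i) measurableT _ mB; rewrite setTI.
    - exact: measurableC.
    move=> e /= Be he; have := @step_bound R n N (Y k w) i e Rad (XY k w) he.
    by move: Aw Be; lra.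
  by rewrite mule0.
suff H : P.-negligible (~` [set w | gmax (Y k.+1 w) <= gmax (Y k w) + Rad]) by exact: H.
pose F := fun m : nat => if @unpickle rat m is Some q then
    (Y k @^-1` [set x | gmax x < ratr q - Rad] `&` Y k.+1 @^-1` [set x | ratr q < gmax x])
    else set0.
have hN : P.-negligible (\bigcup_m F m).
  apply: negligible_bigcup => m; rewrite /F; case: unpickle => [q|]; first exact: bad.
  exact: negligible_set0.
have sub : ~` [set w | gmax (Y k.+1 w) <= gmax (Y k w) + Rad] `<=` \bigcup_m F m.
  move=> w hw.
  have hw' : gmax (Y k w) + Rad < gmax (Y k.+1 w) by rewrite ltNge; apply/negP.
  have [q] := rat_in_itvoo hw'; rewrite in_itv => /andP[h1 h2].
  exists (pickle q); first by [].
  rewrite /F pickleK; split.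
    change (gmax (Y k w) < ratr q - Rad); by rewrite ltrBrDr.
  exact: h2.
move: hN; apply: negligibleS; exact: sub.
Qed.

Theorem lemma3 (R : realType) (n N : nat) (th_a th_d : R)
  (eta : probability (N.-tuple R) R) (Rad : R)
  (d : measure_display) (Omega : measurableType d) (P : probability Omega R)
  (rho : probability (state R n N) R) (Y : nat -> Omega -> state R n N) (k : nat) :
  (0 < n)%N -> (0 < N)%N -> 0 < th_a -> 0 < th_d ->
  (forall j : 'I_N, eta.-integrable setT (fun e => (tnth e j)%:E)) ->
  0 < Rad ->
  eta [set e | supnorm e <= Rad] = 1%E ->
  rho (@Xset R n N) = 1%E ->
  markov_process P Y (mu th_a th_d eta) rho ->
  {ae P, forall w, gmax (Y k.+1 w) <= gmax (Y k w) + Rad} /\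
  {ae P, forall w, gmax (Y k w) <= gmax (Y 0%N w) + k%:R * Rad}.
Proof.
move=> _ _ _ _ _ _ hEta _ hM; split; first exact: (@onestep R n N th_a th_d eta Rad d Omega P rho Y k hEta hM).
elim: k => [|k IH].
  by apply: aeW => w; rewrite mul0r addr0.
move: IH (@onestep R n N th_a th_d eta Rad d Omega P rho Y k hEta hM).
apply: filterS2 => w h1 h2.
rewrite -natr1 mulrDl mul1r addrA.
by apply: (le_trans h2); rewrite lerD2r.
Qed.
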